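(* Let $n=1$ and let $f$ be a Lagrange function of finite order whose Euler–Lagrange expressions $e^1[f],\dots,e^m[f]$ all have order at most $S$ (i.e. depend only on $x$ and $w^j_r$ with $r\le S$). If $S=2K$ is even, then there is a Lagrange function $g$ of order at most $K$ with $e^j[g]=e^j[f]$ for all $j$. If $S=2K+1$ is odd, then there are functions $g_0,g_1,\dots,g_m$ of order at most $K$ such that $e^j[f]=e^j\big[g_0+\sum_{k=1}^m g_k\,w^k_{K+1}\big]$ for all $j$.
   Context: One independent variable $x$, dependent variables $w^1,\dots,w^m$; jet coordinates $w^j_r$ ($r\ge 0$, $w^j_0=w^j$) standing for $d^rw^j/dx^r$. A function ''of order at most $K$'' is a $C^\infty$ function of $x$ and $w^j_r$ with $r\le K$; all functions are defined on the whole corresponding Euclidean space. $\frac{d}{dx}=\partial_x+\sum_{j,r}w^j_{r+1}\partial_{w^j_r}$ and $e^j[f]=\sum_r(-1)^r\frac{d^r}{dx^r}\frac{\partial f}{\partial w^j_r}$. *)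

(* Defs.v *)
From Stdlib Require Import Reals Lra List ClassicalEpsilon.
Open Scope R_scope.

(** Points of jet space: x and the jet coordinates w^j_r (pw j r).
    Only indices j < m are meaningful; functions of order <= K ignore the rest. *)
Record Pt := mkPt { px : R ; pw : nat -> nat -> R }.

Inductive Coord := CX | CW (j r : nat).

Definition shift (p : Pt) (c : Coord) (t : R) : Pt :=
  match c with
  | CX => mkPt (px p + t) (pw p)
  | CW j r => mkPt (px p)
      (fun j' r' => if andb (Nat.eqb j' j) (Nat.eqb r' r)
                    then pw p j' r' + t else pw p j' r')
  end.

(** Partial derivative with respect to a coordinate (chosen classically;
    it is the unique derivative whenever it exists). *)
Definition pd (F : Pt -> R) (c : Coord) : Pt -> R := fun p =>
  epsilon (inhabits 0%R)
    (fun l => derivable_pt_lim (fun t => F (shift p c t)) 0 l).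

Definition ipd (F : Pt -> R) (cs : list Coord) : Pt -> R :=
  fold_right (fun c G => pd G c) F cs.

Definition local (m K : nat) (F : Pt -> R) : Prop :=
  forall p q, px p = px q ->
    (forall j r, (j < m)%nat -> (r <= K)%nat -> pw p j r = pw q j r) ->
    F p = F q.

Definition contK (m K : nat) (G : Pt -> R) : Prop :=
  forall p eps, 0 < eps -> exists delta, 0 < delta /\
    forall q, Rabs (px q - px p) < delta ->
      (forall j r, (j < m)%nat -> (r <= K)%nat -> Rabs (pw q j r - pw p j r) < delta) ->
      Rabs (G q - G p) < eps.

Definition smoothK (m K : nat) (F : Pt -> R) : Prop :=
  forall cs : list Coord,
    (forall c p, exists l, derivable_pt_lim (fun t => ipd F cs (shift p c t)) 0 l)
    /\ contK m K (ipd F cs).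

Definition OrderLE (m K : nat) (F : Pt -> R) : Prop := local m K F /\ smoothK m K F.

Definition FiniteOrder (m : nat) (F : Pt -> R) : Prop := exists K, OrderLE m K F.

(** A bound on the order (any valid one, for finite-order F). *)
Definition ordOf (m : nat) (F : Pt -> R) : nat :=
  epsilon (inhabits 0%nat) (fun K => OrderLE m K F).

Fixpoint sumR (n : nat) (f : nat -> R) : R :=
  match n with O => 0 | S n' => sumR n' f + f n' end.

(** Total derivative d/dx = ∂_x + Σ_{j<m} Σ_r w^j_{r+1} ∂_{w^j_r};
    for F of finite order only r <= order contribute, so truncating at
    ordOf m F gives exactly the (finite) formal sum. *)
Definition Dx (m : nat) (F : Pt -> R) : Pt -> R := fun p =>
  pd F CX p + sumR m (fun j => sumR (S (ordOf m F))
                        (fun r => pw p j (S r) * pd F (CW j r) p)).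

Definition euler (m j : nat) (F : Pt -> R) : Pt -> R := fun p =>
  sumR (S (ordOf m F))
    (fun r => (-1) ^ r * Nat.iter r (Dx m) (pd F (CW j r)) p).

(* Main.v *)
From Stdlib Require Import Reals Lra Lia List ClassicalEpsilon FunctionalExtensionality Classical.
From Coquelicot Require Import Coquelicot.
Require Import Defs.
Open Scope R_scope.


Lemma Pt_ext p q : px p = px q -> (forall j r, pw p j r = pw q j r) -> p = q.
Proof. destruct p, q; simpl; intros -> H; f_equal; extensionality j; extensionality r; auto. Qed.

Ltac ifs := repeat match goal with |- context [if ?b then _ else _] => destruct b end.

Lemma shift0 p c : shift p c 0 = p.
Proof. destruct c; apply Pt_ext; simpl; intros; ifs; lra. Qed.

Lemma shift_add p c u v : shift (shift p c u) c v = shift p c (u + v).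
Proof. destruct c; apply Pt_ext; simpl; intros; ifs; lra. Qed.

Lemma shift_comm p c d u v : shift (shift p c u) d v = shift (shift p d v) c u.
Proof. destruct c, d; apply Pt_ext; simpl; intros; ifs; lra. Qed.

Lemma pd_is F c p l : is_derive (fun t => F (shift p c t)) 0 l -> pd F c p = l.
Proof.
  intro H. apply is_derive_Reals in H. unfold pd.
  pose proof (epsilon_spec (inhabits 0%R) (fun l => derivable_pt_lim (fun t => F (shift p c t)) 0 l) (ex_intro _ l H)) as H'.
  simpl in H'. eapply uniqueness_limite; eassumption.
Qed.

Lemma pd_Derive F c p : ex_derive (fun t => F (shift p c t)) 0 -> pd F c p = Derive (fun t => F (shift p c t)) 0.
Proof. intro H. apply pd_is. apply Derive_correct. exact H. Qed.

Definition hasD (F : Pt -> R) := forall c p, ex_derive (fun t => F (shift p c t)) 0.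

Lemma pd_correct F c p : ex_derive (fun t => F (shift p c t)) 0 -> is_derive (fun t => F (shift p c t)) 0 (pd F c p).
Proof. intro H. rewrite pd_Derive by exact H. apply Derive_correct, H. Qed.

Lemma pd_at F c p u : hasD F -> is_derive (fun t => F (shift p c t)) u (pd F c (shift p c u)).
Proof.
  intro H. pose proof (pd_correct F c (shift p c u) (H c _)) as H1.
  apply (is_derive_ext (fun t => F (shift (shift p c u) c (t - u)))).
  { intro t. rewrite shift_add. f_equal. f_equal. ring. }
  assert (E: is_derive (fun t : R => t - u) u 1).
  { auto_derive; auto; ring. }
  rewrite <- (Rminus_diag u) in H1.
  pose proof (is_derive_comp (fun s => F (shift (shift p c u) c s)) (fun t => t - u) u _ _ H1 E) as C.
  replace (pd F c (shift p c u)) with (scal 1 (pd F c (shift p c u))). exact C.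
  compute. ring.
Qed.

Lemma Derive_at F c p u : hasD F -> Derive (fun t => F (shift p c t)) u = pd F c (shift p c u).
Proof. intro H. apply is_derive_unique, pd_at, H. Qed.

Lemma pd_const F c p : (forall t, F (shift p c t) = F p) -> pd F c p = 0.
Proof.
  intro H. apply pd_is. apply (is_derive_ext (fun _ => F p)). intro; rewrite H; auto.
  apply (is_derive_const (F p)).
Qed.

Lemma pd_plus F G c p : ex_derive (fun t => F (shift p c t)) 0 -> ex_derive (fun t => G (shift p c t)) 0 ->
  pd (fun q => F q + G q) c p = pd F c p + pd G c p.
Proof.
  intros HF HG. apply pd_is. apply (is_derive_plus (fun t => F (shift p c t)) (fun t => G (shift p c t))); apply pd_correct; auto.
Qed.

Lemma pd_mult F G c p : ex_derive (fun t => F (shift p c t)) 0 -> ex_derive (fun t => G (shift p c t)) 0 ->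
  pd (fun q => F q * G q) c p = pd F c p * G p + F p * pd G c p.
Proof.
  intros HF HG. apply pd_is.
  pose proof (is_derive_mult (fun t => F (shift p c t)) (fun t => G (shift p c t)) 0 _ _ (pd_correct _ _ _ HF) (pd_correct _ _ _ HG)) as H.
  simpl in H. rewrite shift0 in H. apply H. intros; apply Rmult_comm.
Qed.

Lemma pd_scal F a c p : ex_derive (fun t => F (shift p c t)) 0 ->
  pd (fun q => a * F q) c p = a * pd F c p.
Proof. intros HF. apply pd_is. apply (is_derive_scal (fun t => F (shift p c t))). apply pd_correct; auto. Qed.

Lemma const_line F c p : hasD F -> (forall u, pd F c (shift p c u) = 0) -> forall t, F (shift p c t) = F p.
Proof.
  intros HD H0 t.
  assert (K: forall a b, a < b -> F (shift p c a) = F (shift p c b)).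
  { intros a b Hab. apply (eq_is_derive (fun t => F (shift p c t))); auto.
    intros s _. pose proof (pd_at F c p s HD) as Hs. rewrite H0 in Hs. exact Hs. }
  destruct (Rtotal_order t 0) as [h|[h|h]].
  - rewrite (K t 0 h), shift0; auto.
  - subst; rewrite shift0; auto.
  - rewrite <- (K 0 t h), shift0; auto.
Qed.


Section M.
Variable m : nat.

Lemma shift_agree K p q c t : px p = px q -> (forall j r, (j < m)%nat -> (r <= K)%nat -> pw p j r = pw q j r) ->
  px (shift p c t) = px (shift q c t) /\ (forall j r, (j < m)%nat -> (r <= K)%nat -> pw (shift p c t) j r = pw (shift q c t) j r).
Proof.
  intros Hx Hw. destruct c; simpl; split; intros; try rewrite Hx; auto.
  ifs; rewrite Hw; auto.
Qed.

Lemma local_pd K F c : local m K F -> local m K (pd F c).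
Proof.
  intros HF p q Hx Hw. unfold pd.
  replace (fun t => F (shift p c t)) with (fun t => F (shift q c t)); auto.
  extensionality t. destruct (shift_agree K p q c t Hx Hw) as [H1 H2]. symmetry; apply HF; auto.
Qed.

Lemma local_ipd K F cs : local m K F -> local m K (ipd F cs).
Proof. intro H; induction cs; simpl; auto. apply local_pd; auto. Qed.

Lemma local_mono K K' F : (K <= K')%nat -> local m K F -> local m K' F.
Proof. intros HK H p q Hx Hw; apply H; auto. intros; apply Hw; auto; lia. Qed.

Lemma contK_mono K K' G : (K <= K')%nat -> contK m K G -> contK m K' G.
Proof.
  intros HK H p e He. destruct (H p e He) as [d [Hd H']]. exists d; split; auto.
  intros q Hx Hw. apply H'; auto. intros; apply Hw; auto; lia.
Qed.

Lemma contK_lower K K' G : local m K G -> contK m K' G -> contK m K G.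
Proof.
  intros HL H p e He. destruct (H p e He) as [d [Hd H']]. exists d; split; auto.
  intros q Hx Hw.
  set (q' := mkPt (px q) (fun j r => if Nat.leb r K then pw q j r else pw p j r)).
  replace (G q) with (G q').
  - apply H'; simpl; auto. intros j r Hj Hr. destruct (Nat.leb r K) eqn:E.
    + apply Hw; auto. apply Nat.leb_le; auto.
    + rewrite Rminus_diag, Rabs_R0; auto.
  - apply HL; simpl; auto. intros j r Hj Hr. replace (Nat.leb r K) with true; auto.
    symmetry; apply Nat.leb_le; auto.
Qed.

Lemma OrderLE_mono K K' F : (K <= K')%nat -> OrderLE m K F -> OrderLE m K' F.
Proof.
  intros HK [HL HS]. split. apply (local_mono K); auto.
  intro cs. destruct (HS cs) as [H1 H2]. split; auto. apply (contK_mono K); auto.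
Qed.

Lemma OrderLE_lower K K' F : local m K F -> OrderLE m K' F -> OrderLE m K F.
Proof.
  intros HL [_ HS]. split; auto. intro cs. destruct (HS cs) as [H1 H2]. split; auto.
  apply (contK_lower K K'); auto. apply local_ipd; auto.
Qed.

Lemma OrderLE_hasD K F : OrderLE m K F -> hasD F.
Proof.
  intros [_ HS] c p. destruct (HS nil) as [H _]. destruct (H c p) as [l Hl].
  exists l. apply is_derive_Reals. exact Hl.
Qed.

Lemma OrderLE_pd K F c : OrderLE m K F -> OrderLE m K (pd F c).
Proof.
  intros [HL HS]. split. apply local_pd; auto.
  intro cs. replace (ipd (pd F c) cs) with (ipd F (cs ++ c :: nil)%list). apply HS.
  unfold ipd. rewrite fold_right_app. reflexivity.
Qed.
End M.


Lemma mult_close a a0 b b0 eps : 0 < eps -> Rabs (a - a0) < eps / (2 * (Rabs b0 + 1)) ->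
  Rabs (b - b0) < Rmin 1 (eps / (2 * (Rabs a0 + 1))) -> Rabs (a * b - a0 * b0) < eps.
Proof.
  intros He H1 H2.
  assert (Hb0 := Rabs_pos b0). assert (Ha0 := Rabs_pos a0).
  assert (H2a : Rabs (b - b0) < 1) by (eapply Rlt_le_trans; [exact H2| apply Rmin_l]).
  assert (H2b : Rabs (b - b0) < eps / (2 * (Rabs a0 + 1))) by (eapply Rlt_le_trans; [exact H2| apply Rmin_r]).
  assert (Hb : Rabs b <= Rabs b0 + 1).
  { replace b with ((b - b0) + b0) by ring. eapply Rle_trans. apply Rabs_triang. lra. }
  replace (a * b - a0 * b0) with ((a - a0) * b + a0 * (b - b0)) by ring.
  eapply Rle_lt_trans. apply Rabs_triang. rewrite !Rabs_mult.
  assert (E1 : Rabs (a - a0) * Rabs b <= eps / 2).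
  { assert (Rabs (a - a0) * (Rabs b0 + 1) <= eps / 2).
    { apply Rlt_le. apply (Rmult_lt_compat_r (Rabs b0 + 1)) in H1; [|lra].
      replace (eps / (2 * (Rabs b0 + 1)) * (Rabs b0 + 1)) with (eps/2) in H1 by (field; lra). lra. }
    eapply Rle_trans; [|exact H]. apply Rmult_le_compat_l; auto. apply Rabs_pos. }
  assert (E2 : Rabs a0 * Rabs (b - b0) < eps / 2).
  { assert (Rabs a0 * Rabs (b - b0) <= Rabs a0 * (eps / (2 * (Rabs a0 + 1)))).
    { apply Rmult_le_compat_l; auto. lra. }
    assert (Rabs a0 * (eps / (2 * (Rabs a0 + 1))) < eps / 2).
    { replace (Rabs a0 * (eps / (2 * (Rabs a0 + 1)))) with ((eps/2) * (Rabs a0 / (Rabs a0 + 1))) by (field; lra).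
      assert (Rabs a0 / (Rabs a0 + 1) < 1). { apply (Rmult_lt_reg_r (Rabs a0 + 1)); [lra|]. field_simplify; lra. }
      assert (0 < eps / 2) by lra. nra. }
    lra. }
  lra.
Qed.

Section M.
Variable m K : nat.

Lemma contK_const a : contK m K (fun _ => a).
Proof. intros p e He. exists 1; split; [lra|]. intros. rewrite Rminus_diag, Rabs_R0; auto. Qed.

Lemma contK_x : contK m K px.
Proof. intros p e He. exists e; split; auto. Qed.

Lemma contK_w j r : (j < m)%nat -> (r <= K)%nat -> contK m K (fun p => pw p j r).
Proof. intros Hj Hr p e He. exists e; split; auto. Qed.

Lemma contK_add F G : contK m K F -> contK m K G -> contK m K (fun p => F p + G p).
Proof.
  intros HF HG p e He.
  destruct (HF p (e/2)) as [d1 [Hd1 H1]]; [lra|].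
  destruct (HG p (e/2)) as [d2 [Hd2 H2]]; [lra|].
  exists (Rmin d1 d2); split. apply Rmin_pos; auto.
  intros q Hx Hw.
  assert (A1 : Rabs (F q - F p) < e/2).
  { apply H1. eapply Rlt_le_trans; [exact Hx| apply Rmin_l].
    intros; eapply Rlt_le_trans; [apply Hw; auto| apply Rmin_l]. }
  assert (A2 : Rabs (G q - G p) < e/2).
  { apply H2. eapply Rlt_le_trans; [exact Hx| apply Rmin_r].
    intros; eapply Rlt_le_trans; [apply Hw; auto| apply Rmin_r]. }
  replace (F q + G q - (F p + G p)) with ((F q - F p) + (G q - G p)) by ring.
  eapply Rle_lt_trans. apply Rabs_triang. lra.
Qed.

Lemma contK_mul F G : contK m K F -> contK m K G -> contK m K (fun p => F p * G p).
Proof.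
  intros HF HG p e He.
  destruct (HF p (e / (2 * (Rabs (G p) + 1)))) as [d1 [Hd1 H1]].
  { apply Rdiv_lt_0_compat; auto. assert (H:=Rabs_pos (G p)); lra. }
  destruct (HG p (Rmin 1 (e / (2 * (Rabs (F p) + 1))))) as [d2 [Hd2 H2]].
  { apply Rmin_pos; [lra|]. apply Rdiv_lt_0_compat; auto. assert (H:=Rabs_pos (F p)); lra. }
  exists (Rmin d1 d2); split. apply Rmin_pos; auto.
  intros q Hx Hw. apply mult_close; auto.
  { apply H1. eapply Rlt_le_trans; [exact Hx| apply Rmin_l].
    intros; eapply Rlt_le_trans; [apply Hw; auto| apply Rmin_l]. }
  { apply H2. eapply Rlt_le_trans; [exact Hx| apply Rmin_r].
    intros; eapply Rlt_le_trans; [apply Hw; auto| apply Rmin_r]. }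
Qed.

Lemma pd_const_fun a c : pd (fun _ => a) c = (fun _ => 0).
Proof. extensionality p. apply pd_const. auto. Qed.

Lemma pd_px c : exists a, pd px c = (fun _ => a).
Proof.
  destruct c.
  - exists 1. extensionality p. apply pd_is. simpl. auto_derive; auto.
  - exists 0. extensionality p. apply pd_const. auto.
Qed.

Lemma pd_pw j r c : exists a, pd (fun p => pw p j r) c = (fun _ => a).
Proof.
  destruct c as [|j' r'].
  - exists 0. extensionality p. apply pd_const. auto.
  - simpl. destruct (Nat.eqb j j' && Nat.eqb r r')%bool eqn:E.
    + exists 1. extensionality p. apply pd_is. simpl. rewrite E. auto_derive; auto.
    + exists 0. extensionality p. apply pd_const. intros; simpl; rewrite E; auto.
Qed.

Lemma hasD_const a : hasD (fun _ => a).
Proof. intros c p. auto_derive; auto. Qed.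
Lemma hasD_px : hasD px.
Proof. intros c p. destruct c; simpl; auto_derive; auto. Qed.
Lemma hasD_pw j r : hasD (fun p => pw p j r).
Proof. intros c p. destruct c; simpl. auto_derive; auto. ifs; auto_derive; auto. Qed.
Lemma hasD_add F G : hasD F -> hasD G -> hasD (fun p => F p + G p).
Proof. intros HF HG c p. apply (ex_derive_plus (fun t => F (shift p c t)) (fun t => G (shift p c t))); [apply HF|apply HG]. Qed.
Lemma hasD_mul F G : hasD F -> hasD G -> hasD (fun p => F p * G p).
Proof. intros HF HG c p. apply (ex_derive_mult (fun t => F (shift p c t)) (fun t => G (shift p c t))); [apply HF|apply HG]. Qed.

Lemma local_const a : local m K (fun _ => a).
Proof. intros p q _ _; auto. Qed.
Lemma local_x : local m K px.
Proof. intros p q H _; auto. Qed.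
Lemma local_w j r : (j < m)%nat -> (r <= K)%nat -> local m K (fun p => pw p j r).
Proof. intros Hj Hr p q _ H; auto. Qed.
Lemma local_add F G : local m K F -> local m K G -> local m K (fun p => F p + G p).
Proof. intros HF HG p q H1 H2. rewrite (HF p q), (HG p q); auto. Qed.
Lemma local_mul F G : local m K F -> local m K G -> local m K (fun p => F p * G p).
Proof. intros HF HG p q H1 H2. rewrite (HF p q), (HG p q); auto. Qed.

End M.


Lemma cont_of_eps (f : R -> R) x : (forall e, 0 < e -> exists d, 0 < d /\ forall y, Rabs (y - x) < d -> Rabs (f y - f x) < e) -> continuous f x.
Proof.
  intro H. apply continuity_pt_filterlim. apply continuity_pt_locally. intros [e He].
  destruct (H e He) as [d [Hd H']]. exists (mkposreal d Hd). intros y Hy. apply H'. exact Hy.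
Qed.

Lemma RInt_abs_bound f a b M : ex_RInt f a b -> (forall t, Rmin a b <= t <= Rmax a b -> Rabs (f t) <= M) ->
  Rabs (RInt f a b) <= Rabs (b - a) * M.
Proof.
  intros He Hb. destruct (Rle_dec a b) as [h|h].
  - rewrite (Rabs_right (b - a)) by lra. apply abs_RInt_le_const; auto.
    intros t Ht; apply Hb. rewrite Rmin_left, Rmax_right; lra.
  - rewrite <- opp_RInt_swap by (apply ex_RInt_swap; auto). change (opp (RInt f b a)) with (- RInt f b a).
    rewrite Rabs_Ropp, (Rabs_left (b - a)) by lra. replace (- (b - a)) with (a - b) by ring.
    apply abs_RInt_le_const; auto. lra. apply ex_RInt_swap; auto.
    intros t Ht; apply Hb. rewrite Rmin_right, Rmax_left; lra.
Qed.

Definition setw (p : Pt) j r s : Pt :=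
  mkPt (px p) (fun j' r' => if andb (Nat.eqb j' j) (Nat.eqb r' r) then s else pw p j' r').

Definition Iop j r (F : Pt -> R) : Pt -> R := fun p => RInt (fun s => F (setw p j r s)) 0 (pw p j r).

Lemma setw_self p j r : setw p j r (pw p j r) = p.
Proof.
  apply Pt_ext; simpl; auto. intros j' r'. destruct (Nat.eqb j' j) eqn:E1; destruct (Nat.eqb r' r) eqn:E2; simpl; auto.
  apply Nat.eqb_eq in E1, E2; subst; auto.
Qed.

Lemma setw_shift_same p j r t s : setw (shift p (CW j r) t) j r s = setw p j r s.
Proof. apply Pt_ext; simpl; auto. intros; ifs; auto. Qed.

Lemma shift_pw_other p c j r t : c <> CW j r -> pw (shift p c t) j r = pw p j r.
Proof.
  intro H. destruct c as [|j' r']; simpl; auto.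
  destruct (Nat.eqb j j') eqn:E1; destruct (Nat.eqb r r') eqn:E2; simpl; auto.
  apply Nat.eqb_eq in E1, E2; subst; tauto.
Qed.

Lemma setw_shift_other p c j r t s : c <> CW j r -> setw (shift p c t) j r s = shift (setw p j r s) c t.
Proof.
  intro H. destruct c as [|j' r']; apply Pt_ext; simpl; auto.
  intros a b. destruct (Nat.eqb a j) eqn:E1; destruct (Nat.eqb b r) eqn:E2;
  destruct (Nat.eqb a j') eqn:E3; destruct (Nat.eqb b r') eqn:E4; simpl; auto.
  apply Nat.eqb_eq in E1, E2, E3, E4; subst; tauto.
Qed.

Section M.
Variable m K : nat.
Variable j r : nat.
Hypothesis Hj : (j < m)%nat.
Hypothesis Hr : (r <= K)%nat.

Lemma setw_close d p q s t : Rabs (px q - px p) < d ->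
  (forall j' r', (j' < m)%nat -> (r' <= K)%nat -> Rabs (pw q j' r' - pw p j' r') < d) -> Rabs (s - t) < d ->
  Rabs (px (setw q j r s) - px (setw p j r t)) < d /\
  (forall j' r', (j' < m)%nat -> (r' <= K)%nat -> Rabs (pw (setw q j r s) j' r' - pw (setw p j r t) j' r') < d).
Proof. intros H1 H2 H3. split; simpl; auto. intros; ifs; auto. Qed.

Lemma cont_setw G q : contK m K G -> forall s0, continuous (fun s => G (setw q j r s)) s0.
Proof.
  intros HG s0. apply cont_of_eps. intros e He. destruct (HG (setw q j r s0) e He) as [d [Hd H]].
  exists d; split; auto. intros y Hy. destruct (setw_close d q q y s0) as [A1 A2]; auto.
  rewrite Rminus_diag, Rabs_R0; auto. intros; rewrite Rminus_diag, Rabs_R0; auto.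
Qed.

Lemma exR_setw G q a b : contK m K G -> ex_RInt (fun s => G (setw q j r s)) a b.
Proof. intro HG. apply (@ex_RInt_continuous R_CompleteNormedModule). intros; apply cont_setw; auto. Qed.

Lemma local_Iop F : local m K F -> local m K (Iop j r F).
Proof.
  intros HF p q Hx Hw. unfold Iop. rewrite (Hw j r) by auto. apply RInt_ext. intros s _.
  apply HF; simpl; auto. intros; ifs; auto.
Qed.

Lemma Iop_derive_same F p : contK m K F -> is_derive (fun t => Iop j r F (shift p (CW j r) t)) 0 (F p).
Proof.
  intro HF. unfold Iop.
  apply (is_derive_ext (fun t => RInt (fun s => F (setw p j r s)) 0 (pw p j r + t))).
  { intro t. replace (pw (shift p (CW j r) t) j r) with (pw p j r + t) by (simpl; rewrite !Nat.eqb_refl; reflexivity).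
    apply RInt_ext; intros; rewrite setw_shift_same; reflexivity. }
  pose proof (is_derive_RInt (fun s => F (setw p j r s)) (fun b => RInt (fun s => F (setw p j r s)) 0 b) 0 (pw p j r)) as H.
  assert (H1 : is_derive (fun b => RInt (fun s => F (setw p j r s)) 0 b) (pw p j r) (F p)).
  { replace (F p) with ((fun s => F (setw p j r s)) (pw p j r)) by (simpl; rewrite setw_self; auto).
    apply H. apply filter_forall. intro b. simpl. apply (@RInt_correct R_CompleteNormedModule), exR_setw; auto.
    apply (cont_setw F p HF (pw p j r)). }
  assert (E: is_derive (fun t : R => pw p j r + t) 0 1) by (auto_derive; auto).
  replace (pw p j r) with (pw p j r + 0) in H1 by ring.
  pose proof (is_derive_comp _ _ 0 _ _ H1 E) as C. simpl in C.
  replace (F p) with (scal 1 (F p)) by (compute; ring). exact C.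
Qed.

Lemma Iop_derive_other F p c : c <> CW j r -> hasD F -> contK m K (pd F c) -> contK m K F ->
  is_derive (fun t => Iop j r F (shift p c t)) 0 (Iop j r (pd F c) p).
Proof.
  intros Hc HD HdF HF. unfold Iop.
  apply (is_derive_ext (fun u => RInt (fun t => F (shift (setw p j r t) c u)) 0 (pw p j r))).
  { intro u. rewrite shift_pw_other by auto. apply RInt_ext. intros; rewrite setw_shift_other; auto. }
  replace (RInt (fun s => pd F c (setw p j r s)) 0 (pw p j r)) with
    (RInt (fun t => Derive (fun u => F (shift (setw p j r t) c u)) 0) 0 (pw p j r)).
  2: { apply RInt_ext. intros; rewrite Derive_at, shift0; auto. }
  apply (is_derive_RInt_param (fun u t => F (shift (setw p j r t) c u))).
  - apply filter_forall. intros x t _. eexists. apply pd_at; auto.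
  - intros t _. intros [e He]. destruct (HdF (setw p j r t) e He) as [d [Hd H]].
    exists (mkposreal d Hd). intros u v Hu Hv. simpl in Hu, Hv.
    rewrite !Derive_at by auto. rewrite shift0.
    rewrite <- setw_shift_other by auto.
    destruct (setw_close d p (shift p c u) v t) as [A1 A2]; auto.
    + destruct c; simpl. replace (px p + u - px p) with (u - 0) by ring; auto.
      rewrite Rminus_diag, Rabs_R0; auto.
    + intros j' r' _ _. destruct c as [|a b]; simpl. rewrite Rminus_diag, Rabs_R0; auto.
      ifs. replace (pw p j' r' + u - pw p j' r') with (u - 0) by ring; auto.
      rewrite Rminus_diag, Rabs_R0; auto.
  - apply filter_forall. intro x. apply (@ex_RInt_continuous R_CompleteNormedModule). intros z _.
    apply cont_of_eps. intros e He. destruct (HF (shift (setw p j r z) c x) e He) as [d [Hd H]].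
    exists d; split; auto. intros y Hy. rewrite <- !setw_shift_other by auto.
    destruct (setw_close d (shift p c x) (shift p c x) y z) as [A1 A2]; auto.
    rewrite Rminus_diag, Rabs_R0; auto. intros; rewrite Rminus_diag, Rabs_R0; auto.
    rewrite <- setw_shift_other in H by auto. apply H; auto.
Qed.

Lemma contK_Iop F : contK m K F -> contK m K (Iop j r F).
Proof.
  intros HF p e He. set (b := pw p j r).
  assert (Hb0 := Rabs_pos b). assert (HF0 := Rabs_pos (F p)).
  set (e1 := e / (2 * (Rabs b + 1))). assert (He1 : 0 < e1) by (apply Rdiv_lt_0_compat; lra).
  assert (G : forall t, exists d : posreal, forall q s, Rabs (px q - px p) < d ->
     (forall j' r', (j' < m)%nat -> (r' <= K)%nat -> Rabs (pw q j' r' - pw p j' r') < d) -> Rabs (s - t) < d ->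
     Rabs (F (setw q j r s) - F (setw p j r t)) < e1 / 2).
  { intro t. destruct (HF (setw p j r t) (e1/2)) as [d [Hd H]]. lra. exists (mkposreal d Hd).
    intros q s H1 H2 H3. destruct (setw_close d p q s t H1 H2 H3) as [A1 A2]. apply H; auto. }
  set (df := fun t => proj1_sig (constructive_indefinite_description _ (G t))).
  assert (Hdf : forall t q s, Rabs (px q - px p) < df t ->
     (forall j' r', (j' < m)%nat -> (r' <= K)%nat -> Rabs (pw q j' r' - pw p j' r') < df t) -> Rabs (s - t) < df t ->
     Rabs (F (setw q j r s) - F (setw p j r t)) < e1 / 2).
  { intro t. exact (proj2_sig (constructive_indefinite_description _ (G t))). }
  destruct (compactness_value_1d (Rmin 0 b) (Rmax 0 b) df) as [d1 Hd1].
  assert (U : forall q s, Rabs (px q - px p) < d1 ->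
     (forall j' r', (j' < m)%nat -> (r' <= K)%nat -> Rabs (pw q j' r' - pw p j' r') < d1) ->
     Rmin 0 b <= s <= Rmax 0 b -> Rabs (F (setw q j r s) - F (setw p j r s)) < e1).
  { intros q s H1 H2 Hs. apply NNPP; intro Hn. apply (Hd1 s Hs). intros [t [Ht [Hst Hdt]]]. apply Hn.
    assert (A : Rabs (F (setw q j r s) - F (setw p j r t)) < e1 / 2).
    { apply Hdf; try lra. intros; specialize (H2 j' r' H H0); lra. }
    assert (B : Rabs (F (setw p j r s) - F (setw p j r t)) < e1 / 2).
    { apply Hdf; try lra. rewrite Rminus_diag, Rabs_R0. apply cond_pos.
      intros; rewrite Rminus_diag, Rabs_R0. apply cond_pos. }
    replace (F (setw q j r s) - F (setw p j r s)) with ((F (setw q j r s) - F (setw p j r t)) - (F (setw p j r s) - F (setw p j r t))) by ring.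
    eapply Rle_lt_trans. apply Rabs_triang. rewrite Rabs_Ropp. lra. }
  destruct (HF p 1 Rlt_0_1) as [d0 [Hd0 H0]].
  set (e2 := e / (2 * (Rabs (F p) + 1))). assert (He2 : 0 < e2) by (apply Rdiv_lt_0_compat; lra).
  exists (Rmin (pos d1) (Rmin d0 e2)). split.
  { apply Rmin_pos. apply cond_pos. apply Rmin_pos; auto. }
  intros q Hx Hw.
  assert (Hm1 := Rmin_l d1 (Rmin d0 e2)). assert (Hm2 := Rmin_r d1 (Rmin d0 e2)).
  assert (Hm3 := Rmin_l d0 e2). assert (Hm4 := Rmin_r d0 e2).
  assert (Hbb : Rabs (pw q j r - b) < Rmin d1 (Rmin d0 e2)) by (apply Hw; auto).
  unfold Iop. fold b.
  rewrite <- (RInt_Chasles (fun s => F (setw q j r s)) 0 b (pw q j r)) by (apply exR_setw; auto).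
  change (plus (RInt (fun s => F (setw q j r s)) 0 b) (RInt (fun s => F (setw q j r s)) b (pw q j r)))
    with (RInt (fun s => F (setw q j r s)) 0 b + RInt (fun s => F (setw q j r s)) b (pw q j r)).
  assert (T1 : Rabs (RInt (fun s => F (setw q j r s)) 0 b - RInt (fun s => F (setw p j r s)) 0 b) <= Rabs (b - 0) * e1).
  { assert (E : RInt (fun s => F (setw q j r s)) 0 b - RInt (fun s => F (setw p j r s)) 0 b =
               RInt (fun s => F (setw q j r s) - F (setw p j r s)) 0 b).
    { symmetry. apply (RInt_minus (V := R_CompleteNormedModule)); apply exR_setw; auto. }
    rewrite E. apply RInt_abs_bound.
    apply (ex_RInt_minus (V := R_NormedModule)); apply exR_setw; auto.
    intros t Ht. apply Rlt_le, U; auto. lra. intros; specialize (Hw j' r' H H1); lra. }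
  assert (T2 : Rabs (RInt (fun s => F (setw q j r s)) b (pw q j r)) <= Rabs (pw q j r - b) * (Rabs (F p) + 1)).
  { apply RInt_abs_bound. apply exR_setw; auto.
    intros t Ht.
    assert (Htb : Rabs (t - b) < d0).
    { assert (Rabs (t - b) <= Rabs (pw q j r - b)).
      { unfold Rmin, Rmax in Ht. destruct (Rle_dec b (pw q j r)); unfold Rabs; repeat destruct Rcase_abs; lra. }
      lra. }
    destruct (setw_close d0 p q t b) as [A1 A2]; auto. lra. intros; specialize (Hw j' r' H H1); lra.
    unfold b in A1, A2. rewrite setw_self in A1, A2. specialize (H0 _ A1 A2).
    replace (F (setw q j r t)) with ((F (setw q j r t) - F p) + F p) by ring.
    eapply Rle_trans. apply Rabs_triang. lra. }
  assert (T3 : Rabs (b - 0) * e1 < e / 2).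
  { rewrite Rminus_0_r. unfold e1.
    replace (Rabs b * (e / (2 * (Rabs b + 1)))) with ((e/2) * (Rabs b / (Rabs b + 1))) by (field; lra).
    assert (Rabs b / (Rabs b + 1) < 1). { apply (Rmult_lt_reg_r (Rabs b + 1)); [lra|]. field_simplify; lra. }
    nra. }
  assert (T4 : Rabs (pw q j r - b) * (Rabs (F p) + 1) < e / 2).
  { assert (Rabs (pw q j r - b) < e2) by lra.
    apply (Rmult_lt_compat_r (Rabs (F p) + 1)) in H; [|lra].
    unfold e2 in H. replace (e / (2 * (Rabs (F p) + 1)) * (Rabs (F p) + 1)) with (e / 2) in H by (field; lra). lra. }
  replace (RInt (fun s => F (setw q j r s)) 0 b + RInt (fun s => F (setw q j r s)) b (pw q j r) - RInt (fun s => F (setw p j r s)) 0 b)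
    with ((RInt (fun s => F (setw q j r s)) 0 b - RInt (fun s => F (setw p j r s)) 0 b) + RInt (fun s => F (setw q j r s)) b (pw q j r)) by ring.
  eapply Rle_lt_trans. apply Rabs_triang. lra.
Qed.

End M.


Section M.
Variable m K : nat.

Inductive Cl : (Pt -> R) -> Prop :=
| cl_base F : OrderLE m K F -> Cl F
| cl_const a : Cl (fun _ => a)
| cl_x : Cl px
| cl_w j r : (j < m)%nat -> (r <= K)%nat -> Cl (fun p => pw p j r)
| cl_add F G : Cl F -> Cl G -> Cl (fun p => F p + G p)
| cl_mul F G : Cl F -> Cl G -> Cl (fun p => F p * G p)
| cl_int j r F : (j < m)%nat -> (r <= K)%nat -> OrderLE m K F -> Cl (Iop j r F).

Lemma Cl_props F : Cl F -> local m K F /\ hasD F /\ contK m K F /\ (forall c, Cl (pd F c)).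
Proof.
  induction 1.
  - split; [apply H|]. split; [eapply OrderLE_hasD; eauto|]. split.
    + destruct H as [_ HS]. apply (HS nil).
    + intro c. apply cl_base. apply OrderLE_pd; auto.
  - split; [apply local_const|]. split; [apply hasD_const|]. split; [apply contK_const|].
    intro c. rewrite pd_const_fun. apply cl_const.
  - split; [apply local_x|]. split; [apply hasD_px|]. split; [apply contK_x|].
    intro c. destruct (pd_px c) as [a ->]. apply cl_const.
  - split; [apply local_w; auto|]. split; [apply hasD_pw|]. split; [apply contK_w; auto|].
    intro c. destruct (pd_pw j r c) as [a ->]. apply cl_const.
  - destruct IHCl1 as [L1 [D1 [C1 P1]]], IHCl2 as [L2 [D2 [C2 P2]]].
    split; [apply local_add; auto|]. split; [apply hasD_add; auto|]. split; [apply contK_add; auto|].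
    intro c. replace (pd (fun p => F p + G p) c) with (fun p => pd F c p + pd G c p).
    apply cl_add; auto. extensionality p. rewrite pd_plus; auto.
  - destruct IHCl1 as [L1 [D1 [C1 P1]]], IHCl2 as [L2 [D2 [C2 P2]]].
    split; [apply local_mul; auto|]. split; [apply hasD_mul; auto|]. split; [apply contK_mul; auto|].
    intro c. replace (pd (fun p => F p * G p) c) with (fun p => pd F c p * G p + F p * pd G c p).
    apply cl_add; apply cl_mul; auto. extensionality p. rewrite pd_mult; auto.
  - assert (HD : hasD F) by (eapply OrderLE_hasD; eauto).
    assert (HC : contK m K F) by (destruct H1 as [_ HS]; apply (HS nil)).
    assert (HC' : forall c, contK m K (pd F c)) by (intro c; destruct (OrderLE_pd m K F c H1) as [_ HS]; apply (HS nil)).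
    split; [apply local_Iop; auto; apply H1|]. split; [|split].
    + intros c p. destruct (classic (c = CW j r)) as [E|E].
      * subst. eexists. apply Iop_derive_same with (m := m) (K := K); auto.
      * eexists. apply Iop_derive_other with (m := m) (K := K); auto.
    + apply contK_Iop; auto.
    + intro c. destruct (classic (c = CW j r)) as [E|E].
      * subst. replace (pd (Iop j r F) (CW j r)) with F. apply cl_base; auto.
        extensionality p. symmetry. apply pd_is. apply Iop_derive_same with (m := m) (K := K); auto.
      * replace (pd (Iop j r F) c) with (Iop j r (pd F c)). apply cl_int; auto. apply OrderLE_pd; auto.
        extensionality p. symmetry. apply pd_is. apply Iop_derive_other with (m := m) (K := K); auto.
Qed.

Lemma Cl_OrderLE F : Cl F -> OrderLE m K F.
Proof.
  intro H. split. apply (Cl_props F H).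
  intro cs. assert (Hc : Cl (ipd F cs)).
  { induction cs; simpl; auto. apply (Cl_props _ IHcs). }
  destruct (Cl_props _ Hc) as [_ [D [C _]]]. split; auto.
  intros c p. destruct (D c p) as [l Hl]. exists l. apply is_derive_Reals; auto.
Qed.

End M.


Lemma shift2_close m K p a b u v d : 0 < d -> Rabs u < d / 2 -> Rabs v < d / 2 ->
  Rabs (px (shift (shift p a v) b u) - px p) < d /\
  (forall j r, (j < m)%nat -> (r <= K)%nat -> Rabs (pw (shift (shift p a v) b u) j r - pw p j r) < d).
Proof.
  intros Hd Hu Hv. destruct a, b; simpl; split; intros; ifs; unfold Rabs in *; repeat destruct Rcase_abs; lra.
Qed.

Lemma cont2 m K G p : contK m K G -> forall a b, continuity_2d_pt (fun u v => G (shift (shift p a v) b u)) 0 0.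
Proof.
  intros HG a b [e He]. destruct (HG p e He) as [d [Hd H]].
  assert (Hd2 : 0 < d / 2) by lra. exists (mkposreal _ Hd2). intros u v Hu Hv. simpl in Hu, Hv.
  rewrite !shift0. rewrite Rminus_0_r in Hu, Hv.
  destruct (shift2_close m K p a b u v d) as [A1 A2]; auto.
Qed.

Lemma schwarz m K F c d p : OrderLE m K F -> pd (pd F c) d p = pd (pd F d) c p.
Proof.
  intro HO.
  assert (HD := OrderLE_hasD m K F HO).
  assert (HDc := OrderLE_hasD m K _ (OrderLE_pd m K F c HO)).
  assert (HDd := OrderLE_hasD m K _ (OrderLE_pd m K F d HO)).
  assert (Cdc : contK m K (pd (pd F d) c)) by (destruct (OrderLE_pd m K _ c (OrderLE_pd m K F d HO)) as [_ HS]; apply (HS nil)).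
  assert (Ccd : contK m K (pd (pd F c) d)) by (destruct (OrderLE_pd m K _ d (OrderLE_pd m K F c HO)) as [_ HS]; apply (HS nil)).
  set (f := fun u v => F (shift (shift p c u) d v)).
  assert (H1 : forall z v, Derive (fun t => f z t) v = pd F d (shift (shift p d v) c z)).
  { intros z v. unfold f. rewrite Derive_at by auto. rewrite shift_comm. auto. }
  assert (H2 : forall u v, Derive (fun z => Derive (fun t => f z t) v) u = pd (pd F d) c (shift (shift p d v) c u)).
  { intros u v. rewrite (Derive_ext _ (fun z => pd F d (shift (shift p d v) c z))) by auto. apply Derive_at; auto. }
  assert (H3 : forall u z, Derive (fun t => f t z) u = pd F c (shift (shift p c u) d z)).
  { intros u z. unfold f. rewrite (Derive_ext _ (fun t => F (shift (shift p d z) c t))) by (intro; rewrite shift_comm; auto).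
    rewrite Derive_at by auto. rewrite shift_comm. auto. }
  assert (H4 : forall u v, Derive (fun z => Derive (fun t => f t z) u) v = pd (pd F c) d (shift (shift p c u) d v)).
  { intros u v. rewrite (Derive_ext _ (fun z => pd F c (shift (shift p c u) d z))) by auto. apply Derive_at; auto. }
  pose proof (Schwarz f 0 0) as S.
  rewrite H2, H4, !shift0 in S.
  symmetry. apply S.
  - exists (mkposreal 1 Rlt_0_1). intros u v _ _. split; [|split; [|split]].
    + exists (pd F c (shift (shift p d v) c u)). unfold f.
      apply (is_derive_ext (fun t => F (shift (shift p d v) c t))). intro; rewrite shift_comm; auto. apply pd_at; auto.
    + exists (pd F d (shift (shift p c u) d v)). apply pd_at; auto.
    + exists (pd (pd F d) c (shift (shift p d v) c u)).
      apply (is_derive_ext (fun z => pd F d (shift (shift p d v) c z))). intros; rewrite H1; auto. apply pd_at; auto.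
    + exists (pd (pd F c) d (shift (shift p c u) d v)).
      apply (is_derive_ext (fun z => pd F c (shift (shift p c u) d z))). intros; rewrite H3; auto. apply pd_at; auto.
  - intros e. destruct (cont2 m K _ p Cdc d c e) as [dl Hdl]. exists dl. intros u v Hu Hv.
    rewrite !H2. rewrite !shift0 in Hdl. rewrite !shift0. apply Hdl; auto.
  - intros e. destruct (cont2 m K _ p Ccd c d e) as [dl Hdl]. exists dl. intros u v Hu Hv.
    rewrite !H4. rewrite !shift0 in Hdl. rewrite !shift0. apply Hdl; auto.
Qed.


Lemma sumR_ext n f g : (forall i, (i < n)%nat -> f i = g i) -> sumR n f = sumR n g.
Proof. induction n; simpl; intros; auto. rewrite IHn, H; auto. Qed.
Lemma sumR_plus n f g : sumR n (fun i => f i + g i) = sumR n f + sumR n g.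
Proof. induction n; simpl; auto. ring. rewrite IHn; ring. Qed.
Lemma sumR_scal n a f : sumR n (fun i => a * f i) = a * sumR n f.
Proof. induction n; simpl; auto. ring. rewrite IHn; ring. Qed.
Lemma sumR_zero n f : (forall i, (i < n)%nat -> f i = 0) -> sumR n f = 0.
Proof. induction n; simpl; intros; auto. rewrite IHn, H; auto. ring. Qed.
Lemma sumR_extend A B f : (A <= B)%nat -> (forall i, (A <= i < B)%nat -> f i = 0) -> sumR B f = sumR A f.
Proof.
  intros H. induction H; intros; auto. simpl. rewrite IHle, H0. ring. lia. intros; apply H0; lia.
Qed.
Lemma sumR_ind n k X : sumR n (fun i => if Nat.eqb i k then X i else 0) = if Nat.ltb k n then X k else 0.
Proof.
  induction n; simpl; auto. rewrite IHn.
  destruct (Nat.eqb n k) eqn:E.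
  - apply Nat.eqb_eq in E; subst. replace (Nat.ltb k k) with false by (symmetry; apply Nat.ltb_ge; lia).
    replace (Nat.ltb k (S k)) with true by (symmetry; apply Nat.ltb_lt; lia). ring.
  - apply Nat.eqb_neq in E. destruct (Nat.ltb k n) eqn:E2.
    + apply Nat.ltb_lt in E2. replace (Nat.ltb k (S n)) with true by (symmetry; apply Nat.ltb_lt; lia). ring.
    + apply Nat.ltb_ge in E2. replace (Nat.ltb k (S n)) with false by (symmetry; apply Nat.ltb_ge; lia). ring.
Qed.
Lemma sumR_first n f : sumR (S n) f = f 0%nat + sumR n (fun i => f (S i)).
Proof. induction n; simpl. ring. simpl in IHn. rewrite IHn. ring. Qed.

Lemma hasD_sumR n (f : nat -> Pt -> R) : (forall i, (i < n)%nat -> hasD (f i)) -> hasD (fun q => sumR n (fun i => f i q)).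
Proof.
  induction n; intros H; simpl. apply hasD_const.
  apply hasD_add. apply IHn; auto. apply H; lia.
Qed.

Lemma pd_sumR n (f : nat -> Pt -> R) c p : (forall i, (i < n)%nat -> hasD (f i)) ->
  pd (fun q => sumR n (fun i => f i q)) c p = sumR n (fun i => pd (f i) c p).
Proof.
  induction n; intros H; simpl.
  - apply pd_const; auto.
  - rewrite pd_plus. rewrite IHn; auto. apply (hasD_sumR n f); auto. apply H; lia.
Qed.

Lemma pd_pw_CW a b j r p : pd (fun q => pw q a b) (CW j r) p = if andb (Nat.eqb a j) (Nat.eqb b r) then 1 else 0.
Proof.
  destruct (andb (Nat.eqb a j) (Nat.eqb b r)) eqn:E.
  - apply pd_is. simpl. rewrite E. auto_derive; auto.
  - apply pd_const. intros; simpl; rewrite E; auto.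
Qed.

Lemma pd_pw_mul a b H c p : hasD H ->
  pd (fun q => pw q a b * H q) c p = pd (fun q => pw q a b) c p * H p + pw p a b * pd H c p.
Proof. intros HH. apply pd_mult. apply hasD_pw. apply HH. Qed.

Section M.
Variable m : nat.

Lemma pd_out M G j r p : local m M G -> ((m <= j)%nat \/ (M < r)%nat) -> pd G (CW j r) p = 0.
Proof.
  intros HL Hjr. apply pd_const. intro t. apply HL; simpl; auto.
  intros j' r' Hj Hr. destruct (Nat.eqb j' j && Nat.eqb r' r)%bool eqn:E; auto.
  apply andb_prop in E; destruct E as [E1 E2]; apply Nat.eqb_eq in E1, E2; subst; lia.
Qed.

Lemma Cl_sumR K n (f : nat -> Pt -> R) : (forall i, (i < n)%nat -> Cl m K (f i)) -> Cl m K (fun q => sumR n (fun i => f i q)).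
Proof.
  induction n; intros H; simpl. apply cl_const.
  apply cl_add. apply IHn; auto. apply H; lia.
Qed.

Definition DxM M (G : Pt -> R) : Pt -> R := fun p =>
  pd G CX p + sumR m (fun j => sumR (S M) (fun r => pw p j (S r) * pd G (CW j r) p)).

Lemma DxM_le A B G : OrderLE m A G -> (A <= B)%nat -> DxM B G = DxM A G.
Proof.
  intros HA HAB. extensionality p. unfold DxM. f_equal. apply sumR_ext. intros j Hj.
  apply sumR_extend. lia. intros r Hr. rewrite (pd_out A G); [ring| apply HA | right; lia].
Qed.

Lemma Dx_eq M G : OrderLE m M G -> Dx m G = DxM M G.
Proof.
  intro HM. assert (H0 : OrderLE m (ordOf m G) G).
  { unfold ordOf. apply (epsilon_spec (inhabits 0%nat) (fun K => OrderLE m K G)). eauto. }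
  change (Dx m G) with (DxM (ordOf m G) G).
  destruct (Nat.le_ge_cases (ordOf m G) M).
  - symmetry; apply DxM_le; auto.
  - apply DxM_le; auto.
Qed.

Lemma DxM_Cl M G : OrderLE m M G -> Cl m (S M) (DxM M G).
Proof.
  intro HG. unfold DxM. apply cl_add.
  - apply cl_base. apply OrderLE_mono with M; [lia|]. apply OrderLE_pd; auto.
  - apply (Cl_sumR (S M) m (fun j q => sumR (S M) (fun r => pw q j (S r) * pd G (CW j r) q))). intros j Hj.
    apply (Cl_sumR (S M) (S M) (fun r q => pw q j (S r) * pd G (CW j r) q)). intros r Hr.
    apply cl_mul. apply cl_w; lia. apply cl_base. apply OrderLE_mono with M; [lia|]. apply OrderLE_pd; auto.
Qed.

Lemma Dx_order M G : OrderLE m M G -> OrderLE m (S M) (Dx m G).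
Proof. intro H. rewrite (Dx_eq M); auto. apply Cl_OrderLE, DxM_Cl; auto. Qed.

Lemma iter_order M G r : OrderLE m M G -> OrderLE m (M + r) (Nat.iter r (Dx m) G).
Proof.
  intro H. induction r; simpl. rewrite Nat.add_0_r; auto.
  replace (M + S r)%nat with (S (M + r)) by lia. apply Dx_order; auto.
Qed.

Lemma OrderLE_const K a : OrderLE m K (fun _ => a).
Proof. apply Cl_OrderLE, cl_const. Qed.

Lemma Dx_zero : Dx m (fun _ => 0) = (fun _ => 0).
Proof.
  rewrite (Dx_eq 0) by apply OrderLE_const. extensionality p. unfold DxM.
  rewrite pd_const by auto. rewrite sumR_zero; [ring|]. intros j _. apply sumR_zero. intros r _.
  rewrite pd_const by auto. ring.
Qed.

Lemma iter_zero r : Nat.iter r (Dx m) (fun _ => 0) = (fun _ => 0).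
Proof. induction r; simpl; auto. rewrite IHr. apply Dx_zero. Qed.

Definition eulerM j M (F : Pt -> R) : Pt -> R := fun p =>
  sumR (S M) (fun r => (-1) ^ r * Nat.iter r (Dx m) (pd F (CW j r)) p).

Lemma pd_out_fun M G j r : local m M G -> (M < r)%nat -> pd G (CW j r) = (fun _ => 0).
Proof. intros; extensionality p; apply (pd_out M); auto. Qed.

Lemma eulerM_le A B j F : OrderLE m A F -> (A <= B)%nat -> eulerM j B F = eulerM j A F.
Proof.
  intros HA HAB. extensionality p. unfold eulerM. apply sumR_extend. lia.
  intros r Hr. rewrite (pd_out_fun A F) by (try apply HA; lia). rewrite iter_zero. ring.
Qed.

Lemma euler_eq j M F : OrderLE m M F -> euler m j F = eulerM j M F.
Proof.
  intro HM. assert (H0 : OrderLE m (ordOf m F) F).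
  { unfold ordOf. apply (epsilon_spec (inhabits 0%nat) (fun K => OrderLE m K F)). eauto. }
  change (euler m j F) with (eulerM j (ordOf m F) F).
  destruct (Nat.le_ge_cases (ordOf m F) M).
  - symmetry; apply eulerM_le; auto.
  - apply eulerM_le; auto.
Qed.


End M.


Section M.
Variable m : nat.

Lemma hasD_lin a b F G : hasD F -> hasD G -> hasD (fun p => a * F p + b * G p).
Proof. intros. apply hasD_add; apply hasD_mul; auto; apply hasD_const. Qed.

Lemma pd_lin a b F G c p : hasD F -> hasD G -> pd (fun q => a * F q + b * G q) c p = a * pd F c p + b * pd G c p.
Proof.
  intros HF HG.
  rewrite pd_plus.
  - rewrite (pd_scal F a c p (HF c p)), (pd_scal G b c p (HG c p)). reflexivity.
  - exact (hasD_mul (fun _ => a) F (hasD_const a) HF c p).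
  - exact (hasD_mul (fun _ => b) G (hasD_const b) HG c p).
Qed.

Lemma OrderLE_lin M a b F G : OrderLE m M F -> OrderLE m M G -> OrderLE m M (fun p => a * F p + b * G p).
Proof. intros. apply Cl_OrderLE. apply cl_add; apply cl_mul; try apply cl_const; apply cl_base; auto. Qed.

Lemma Dx_lin M a b F G : OrderLE m M F -> OrderLE m M G ->
  Dx m (fun p => a * F p + b * G p) = (fun p => a * Dx m F p + b * Dx m G p).
Proof.
  intros HF HG. assert (DF := OrderLE_hasD m M F HF). assert (DG := OrderLE_hasD m M G HG).
  rewrite !(Dx_eq m M) by (auto; apply OrderLE_lin; auto).
  extensionality p. unfold DxM. rewrite pd_lin by auto.
  rewrite (sumR_ext m _ (fun j => a * sumR (S M) (fun r => pw p j (S r) * pd F (CW j r) p) + b * sumR (S M) (fun r => pw p j (S r) * pd G (CW j r) p))).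
  rewrite sumR_plus, !sumR_scal. ring.
  intros j _. rewrite <- !sumR_scal, <- sumR_plus. apply sumR_ext. intros r _. rewrite pd_lin by auto. ring.
Qed.

Lemma iter_lin M a b F G r : OrderLE m M F -> OrderLE m M G ->
  Nat.iter r (Dx m) (fun p => a * F p + b * G p) = (fun p => a * Nat.iter r (Dx m) F p + b * Nat.iter r (Dx m) G p).
Proof.
  intros HF HG. induction r; simpl; auto. rewrite IHr. apply (Dx_lin (M + r)); apply iter_order; auto.
Qed.

Lemma euler_lin M j a b F G : OrderLE m M F -> OrderLE m M G ->
  euler m j (fun p => a * F p + b * G p) = (fun p => a * euler m j F p + b * euler m j G p).
Proof.
  intros HF HG. assert (DF := OrderLE_hasD m M F HF). assert (DG := OrderLE_hasD m M G HG).
  rewrite !(euler_eq m j M) by (auto; apply OrderLE_lin; auto).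
  extensionality p. unfold eulerM. rewrite <- !sumR_scal, <- sumR_plus. apply sumR_ext. intros r _.
  replace (pd (fun q => a * F q + b * G q) (CW j r)) with (fun q => a * pd F (CW j r) q + b * pd G (CW j r) q).
  rewrite (iter_lin M) by (apply OrderLE_pd; auto). ring.
  extensionality q. rewrite pd_lin; auto.
Qed.

Lemma ind_sum2 j r0 n X : (j < m)%nat ->
  sumR m (fun j' => sumR n (fun r' => (if andb (Nat.eqb j' j) (Nat.eqb r' r0) then 1 else 0) * X j' r')) =
  if Nat.ltb r0 n then X j r0 else 0.
Proof.
  intro Hj.
  rewrite (sumR_ext m _ (fun j' => if Nat.eqb j' j then (if Nat.ltb r0 n then X j' r0 else 0) else 0)).
  - rewrite sumR_ind. replace (Nat.ltb j m) with true; auto. symmetry; apply Nat.ltb_lt; auto.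
  - intros j' _. destruct (Nat.eqb j' j).
    + rewrite <- sumR_ind. apply sumR_ext. intros r' _. simpl. destruct (Nat.eqb r' r0); ring.
    + apply sumR_zero. intros; simpl; ring.
Qed.

Lemma pd_Dx M B j r : OrderLE m M B -> (j < m)%nat ->
  pd (Dx m B) (CW j r) = (fun p => Dx m (pd B (CW j r)) p + match r with O => 0 | S r' => pd B (CW j r') p end).
Proof.
  intros HB Hj. assert (DB := OrderLE_hasD m M B HB).
  assert (DBc : forall c, hasD (pd B c)) by (intro c; apply (OrderLE_hasD m M), OrderLE_pd; auto).
  rewrite (Dx_eq m M B HB), (Dx_eq m M (pd B (CW j r))) by (apply OrderLE_pd; auto).
  extensionality p. unfold DxM.
  assert (HS : forall j', hasD (fun q => sumR (S M) (fun r' => pw q j' (S r') * pd B (CW j' r') q))).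
  { intro j'. apply (hasD_sumR (S M) (fun r' q => pw q j' (S r') * pd B (CW j' r') q)). intros. apply hasD_mul; auto. apply hasD_pw. }
  assert (HS' : hasD (fun q => sumR m (fun j' => sumR (S M) (fun r' => pw q j' (S r') * pd B (CW j' r') q)))).
  { exact (hasD_sumR m (fun j' q => sumR (S M) (fun r' => pw q j' (S r') * pd B (CW j' r') q)) (fun i _ => HS i)). }
  rewrite (pd_plus _ _ _ _ (DBc CX (CW j r) p) (HS' (CW j r) p)).
  rewrite (pd_sumR m (fun j' q => sumR (S M) (fun r' => pw q j' (S r') * pd B (CW j' r') q))) by auto.
  rewrite (sumR_ext m _ (fun j' => sumR (S M) (fun r' => (if andb (Nat.eqb j' j) (Nat.eqb (S r') r) then 1 else 0) * pd B (CW j' r') p)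
       + sumR (S M) (fun r' => pw p j' (S r') * pd (pd B (CW j r)) (CW j' r') p))).
  2: { intros j' _. rewrite <- sumR_plus.
       rewrite (pd_sumR (S M) (fun r' q => pw q j' (S r') * pd B (CW j' r') q)).
       2: { intros. apply hasD_mul; auto. apply hasD_pw. }
       apply sumR_ext. intros r' _. rewrite pd_pw_mul by auto. rewrite pd_pw_CW.
       rewrite (schwarz m M B (CW j' r') (CW j r)); auto. }
  rewrite sumR_plus. rewrite (schwarz m M B CX (CW j r)); auto.
  assert (E : sumR m (fun j' => sumR (S M) (fun r' => (if andb (Nat.eqb j' j) (Nat.eqb (S r') r) then 1 else 0) * pd B (CW j' r') p))
     = match r with O => 0 | S r' => pd B (CW j r') p end).
  { destruct r as [|r0].
    - apply sumR_zero. intros. apply sumR_zero. intros. simpl. rewrite Bool.andb_false_r. ring.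
    - rewrite (sumR_ext m _ (fun j' => sumR (S M) (fun r' => (if andb (Nat.eqb j' j) (Nat.eqb r' r0) then 1 else 0) * pd B (CW j' r') p))) by (intros; reflexivity).
      rewrite (ind_sum2 j r0 (S M) (fun j' r' => pd B (CW j' r') p)) by auto. destruct (Nat.ltb r0 (S M)) eqn:E; auto.
      apply Nat.ltb_ge in E. rewrite (pd_out m M); auto. apply HB. }
  rewrite E. ring.
Qed.

Lemma iter_succ_r (f : (Pt -> R) -> (Pt -> R)) r x : Nat.iter r f (f x) = Nat.iter (S r) f x.
Proof. induction r; simpl; auto. rewrite IHr; auto. Qed.

Lemma euler_Dx_zero M B j : OrderLE m M B -> (j < m)%nat -> euler m j (Dx m B) = (fun _ => 0).
Proof.
  intros HB Hj. rewrite (euler_eq m j (S M)) by (apply Dx_order; auto).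
  extensionality p. unfold eulerM.
  set (T := fun r => Nat.iter (S r) (Dx m) (pd B (CW j r)) p).
  assert (Hg : forall r, (-1) ^ r * Nat.iter r (Dx m) (pd (Dx m B) (CW j r)) p =
     (-1) ^ r * T r + match r with O => 0 | S r0 => (-1) ^ r * T r0 end).
  { intro r. rewrite (pd_Dx M) by auto. destruct r as [|r0].
    - simpl. unfold T. simpl. ring.
    - replace (fun p0 => Dx m (pd B (CW j (S r0))) p0 + pd B (CW j r0) p0) with
        (fun p0 => 1 * Dx m (pd B (CW j (S r0))) p0 + 1 * pd B (CW j r0) p0) by (extensionality q; ring).
      rewrite (iter_lin (S M)). unfold T. rewrite iter_succ_r. simpl. ring.
      apply Dx_order, OrderLE_pd; auto. apply OrderLE_mono with M. lia. apply OrderLE_pd; auto. }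
  rewrite (sumR_ext _ _ _ (fun r _ => Hg r)). rewrite sumR_plus.
  rewrite sumR_first. simpl (match 0%nat with O => 0 | S _ => _ end).
  assert (TM : T (S M) = 0).
  { unfold T. rewrite (pd_out_fun m M) by (try apply HB; lia). rewrite iter_zero. auto. }
  assert (Ex : sumR (S (S M)) (fun r => (-1) ^ r * T r) = sumR (S M) (fun r => (-1) ^ r * T r) + (-1) ^ (S M) * T (S M)) by reflexivity.
  assert (E1 : (-1)^0 * T 0%nat + sumR (S M) (fun i => (-1)^(S i) * T (S i)) = sumR (S (S M)) (fun r => (-1)^r * T r)) by (exact (eq_sym (sumR_first (S M) (fun r => (-1)^r * T r)))).
  rewrite E1, Ex, TM.
  rewrite (sumR_first (S M) (fun i => match i with 0%nat => 0 | S r0 => (-1)^i * T r0 end)).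
  rewrite (sumR_ext (S M) (fun i => match S i with O => 0 | S r0 => (-1) ^ S i * T r0 end) (fun i => -1 * ((-1) ^ i * T i))).
  2: { intros; simpl; ring. }
  rewrite sumR_scal. ring.
Qed.

Lemma pd_iter_top M G r k : OrderLE m M G -> (k < m)%nat -> pd (Nat.iter r (Dx m) G) (CW k (M + r)) = pd G (CW k M).
Proof.
  intros HG Hk. induction r.
  - simpl. rewrite Nat.add_0_r. auto.
  - simpl Nat.iter. rewrite (pd_Dx (M + r)) by (try apply iter_order; auto).
    replace (M + S r)%nat with (S (M + r)) by lia.
    rewrite (pd_out_fun m (M + r)) by (try apply iter_order; auto; lia). rewrite Dx_zero.
    rewrite IHr. extensionality p. ring.
Qed.

Lemma pd_eulerM n j c p F : (forall r, hasD (Nat.iter r (Dx m) (pd F (CW j r)))) ->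
  pd (eulerM m j n F) c p = sumR (S n) (fun r => (-1) ^ r * pd (Nat.iter r (Dx m) (pd F (CW j r))) c p).
Proof.
  intro HD. unfold eulerM.
  rewrite (pd_sumR (S n) (fun r q => (-1) ^ r * Nat.iter r (Dx m) (pd F (CW j r)) q)).
  apply sumR_ext. intros. apply pd_scal. apply HD.
  intros. apply hasD_mul. apply hasD_const. apply HD.
Qed.

Lemma hess M f j k p : OrderLE m M f -> (j < m)%nat -> (k < m)%nat ->
  pd (eulerM m j M f) (CW k (M + M)) p = (-1) ^ M * pd (pd f (CW j M)) (CW k M) p.
Proof.
  intros Hf Hj Hk. rewrite pd_eulerM.
  2: { intro r. apply (OrderLE_hasD m (M + r)), iter_order, OrderLE_pd; auto. }
  simpl sumR. rewrite sumR_zero.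
  - rewrite pd_iter_top; auto. ring. apply OrderLE_pd; auto.
  - intros r Hr. rewrite (pd_out m (M + r)). ring. apply iter_order, OrderLE_pd; auto. right; lia.
Qed.

Lemma mixed N f j k p : OrderLE m (S N) f -> (forall i, (i < m)%nat -> OrderLE m N (pd f (CW i (S N)))) ->
  (j < m)%nat -> (k < m)%nat ->
  pd (eulerM m j (S N) f) (CW k (S N + N)) p =
  (-1) ^ (S N) * (pd (pd f (CW j (S N))) (CW k N) p - pd (pd f (CW k (S N))) (CW j N) p).
Proof.
  intros Hf HN Hj Hk. rewrite pd_eulerM.
  2: { intro r. apply (OrderLE_hasD m (S N + r)), iter_order, OrderLE_pd; auto. }
  cbn [sumR]. rewrite sumR_zero.
  - rewrite (pd_iter_top (S N) _ N k); auto. 2: apply OrderLE_pd; auto.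
    replace (S N + N)%nat with (N + S N)%nat by lia.
    rewrite (pd_iter_top N); auto.
    rewrite (schwarz m (S N) f (CW j N) (CW k (S N))); auto. simpl. ring.
  - intros r Hr. rewrite (pd_out m (S N + r)). ring. apply iter_order, OrderLE_pd; auto. right; lia.
Qed.

End M.


Section M.
Variable m : nat.

Definition Pmix (p q : Pt) M n : Pt :=
  mkPt (px p) (fun j r => if andb (Nat.eqb r (S M)) (Nat.ltb j n) then pw q j r else pw p j r).

Lemma zero_lower M F : OrderLE m (S M) F -> (forall k p, (k < m)%nat -> pd F (CW k (S M)) p = 0) -> OrderLE m M F.
Proof.
  intros HF H0. apply (OrderLE_lower m M (S M)); auto.
  assert (HL := proj1 HF). assert (HD := OrderLE_hasD m (S M) F HF).
  intros p q Hx Hw.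
  assert (S1 : forall n, (n <= m)%nat -> F (Pmix p q M n) = F p).
  { induction n; intros Hn.
    - f_equal. apply Pt_ext; simpl; auto. intros j r. rewrite Bool.andb_false_r. auto.
    - rewrite <- IHn by lia.
      rewrite <- (const_line F (CW n (S M)) (Pmix p q M n) HD (fun u => H0 n _ ltac:(lia)) (pw q n (S M) - pw p n (S M))).
      apply HL; simpl; auto. intros j r Hj Hr.
      destruct (Nat.eqb r (S M)) eqn:E1; destruct (Nat.eqb j n) eqn:E2; simpl.
      + apply Nat.eqb_eq in E1, E2; subst. rewrite Nat.ltb_irrefl.
        replace (Nat.ltb n (S n)) with true by (symmetry; apply Nat.ltb_lt; lia). ring.
      + apply Nat.eqb_neq in E2. destruct (Nat.ltb j (S n)) eqn:E3; destruct (Nat.ltb j n) eqn:E4; auto.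
        apply Nat.ltb_lt in E3; apply Nat.ltb_ge in E4; lia.
        apply Nat.ltb_ge in E3; apply Nat.ltb_lt in E4; lia.
      + auto.
      + auto. }
  rewrite <- (S1 m (le_n m)). apply HL; simpl; auto. intros j r Hj Hr.
  destruct (Nat.eqb r (S M)) eqn:E1; simpl.
  - replace (Nat.ltb j m) with true by (symmetry; apply Nat.ltb_lt; lia). auto.
  - apply Nat.eqb_neq in E1. apply Hw; auto; lia.
Qed.

Lemma Iop_zero j r F p : (forall q, F q = 0) -> Iop j r F p = 0.
Proof.
  intro H. unfold Iop. rewrite (RInt_ext _ (fun _ => 0)) by (intros; apply H).
  rewrite RInt_const. compute. ring.
Qed.

Lemma poincare_gen M : forall n, (n <= m)%nat -> forall b : nat -> Pt -> R,
  (forall k, (k < m)%nat -> OrderLE m M (b k)) ->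
  (forall j k p, (j < m)%nat -> (k < m)%nat -> pd (b j) (CW k M) p = pd (b k) (CW j M) p) ->
  (forall k p, (n <= k < m)%nat -> b k p = 0) ->
  exists B, OrderLE m M B /\ forall k p, (k < m)%nat -> pd B (CW k M) p = b k p.
Proof.
  induction n; intros Hn b Hb Hc Hz.
  - exists (fun _ => 0). split. apply OrderLE_const. intros k p Hk. rewrite pd_const by auto. rewrite Hz; auto; lia.
  - set (B1 := Iop n M (b n)).
    assert (HB1 : OrderLE m M B1) by (apply Cl_OrderLE, cl_int; auto; lia).
    assert (HbD : forall k, (k < m)%nat -> hasD (b k)) by (intros; apply (OrderLE_hasD m M); auto).
    set (b' := fun k => fun p => 1 * b k p + -1 * pd B1 (CW k M) p).
    destruct (IHn ltac:(lia) b') as [B2 [HB2 HB2']].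
    + intros k Hk. apply OrderLE_lin; auto. apply OrderLE_pd; auto.
    + intros j k p Hj Hk. unfold b'.
      assert (DB1 : forall k, hasD (pd B1 (CW k M))) by (intro; apply (OrderLE_hasD m M), OrderLE_pd; auto).
      rewrite (pd_lin 1 (-1) (b j) _ (CW k M) p (HbD j Hj) (DB1 j)).
      rewrite (pd_lin 1 (-1) (b k) _ (CW j M) p (HbD k Hk) (DB1 k)).
      rewrite (Hc j k p Hj Hk), (schwarz m M B1 (CW j M) (CW k M)); auto.
    + intros k p Hk. unfold b'. destruct (Nat.eq_dec k n) as [->|Hkn].
      * assert (pd B1 (CW n M) p = b n p).
        { apply pd_is. apply Iop_derive_same with (m := m) (K := M); try lia. destruct (Hb n ltac:(lia)) as [_ HS]. apply (HS nil). }
        rewrite H. ring.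
      * rewrite Hz by lia.
        assert (pd B1 (CW k M) p = 0).
        { rewrite (pd_is _ _ _ (Iop n M (pd (b n) (CW k M)) p)).
          - apply Iop_zero. intro q. rewrite Hc by lia.
            apply pd_const. intros; rewrite !Hz by lia; auto.
          - apply Iop_derive_other with (m := m) (K := M); try lia.
            intro E; inversion E; lia. apply HbD; lia.
            destruct (OrderLE_pd m M _ (CW k M) (Hb n ltac:(lia))) as [_ HS]. apply (HS nil).
            destruct (Hb n ltac:(lia)) as [_ HS]. apply (HS nil). }
        rewrite H. ring.
    + exists (fun p => 1 * B1 p + 1 * B2 p). split. apply OrderLE_lin; auto.
      intros k p Hk. rewrite pd_lin by (apply (OrderLE_hasD m M); auto). rewrite HB2' by auto. unfold b'. ring.
Qed.

Lemma poincare M (b : nat -> Pt -> R) :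
  (forall k, (k < m)%nat -> OrderLE m M (b k)) ->
  (forall j k p, (j < m)%nat -> (k < m)%nat -> pd (b j) (CW k M) p = pd (b k) (CW j M) p) ->
  exists B, OrderLE m M B /\ forall k p, (k < m)%nat -> pd B (CW k M) p = b k p.
Proof. intros. apply (poincare_gen M m (le_n m)); auto. intros; lia. Qed.

End M.


Section M.
Variable m : nat.

Lemma pow_m1_neq0 n : (-1) ^ n <> 0.
Proof. apply pow_nonzero. lra. Qed.

Lemma hess_step N f T : OrderLE m (S N) f -> (forall j, (j < m)%nat -> OrderLE m T (euler m j f)) ->
  (T < S N + S N)%nat -> forall i, (i < m)%nat -> OrderLE m N (pd f (CW i (S N))).
Proof.
  intros Hf HE HT i Hi. apply zero_lower. apply OrderLE_pd; auto.
  intros k p Hk.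
  pose proof (hess m (S N) f i k p Hf Hi Hk) as Hh.
  rewrite (pd_out m T) in Hh. 2: { rewrite <- (euler_eq m i (S N) f Hf). apply HE; auto. } 2: right; lia.
  destruct (Rmult_integral _ _ (eq_sym Hh)) as [E|E]; auto. exfalso; apply (pow_m1_neq0 _ E).
Qed.

Lemma reduce T : forall n f, OrderLE m (T + n) f -> (forall j, (j < m)%nat -> OrderLE m (2 * T) (euler m j f)) ->
  exists g, OrderLE m T g /\ forall j, (j < m)%nat -> euler m j g = euler m j f.
Proof.
  induction n; intros f Hf HE.
  - exists f. rewrite Nat.add_0_r in Hf. split; auto.
  - set (N := (T + n)%nat). replace (T + S n)%nat with (S N) in Hf by (unfold N; lia).
    assert (Hb : forall i, (i < m)%nat -> OrderLE m N (pd f (CW i (S N)))).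
    { apply (hess_step N f (2 * T)); auto. unfold N; lia. }
    assert (Hc : forall j k p, (j < m)%nat -> (k < m)%nat ->
              pd (pd f (CW j (S N))) (CW k N) p = pd (pd f (CW k (S N))) (CW j N) p).
    { intros j k p Hj Hk. pose proof (mixed m N f j k p Hf Hb Hj Hk) as Hm.
      rewrite (pd_out m (2 * T)) in Hm. 2: { rewrite <- (euler_eq m j (S N) f Hf). apply HE; auto. } 2: right; unfold N; lia.
      destruct (Rmult_integral _ _ (eq_sym Hm)) as [E|E]. exfalso; apply (pow_m1_neq0 _ E). lra. }
    destruct (poincare m N (fun k => pd f (CW k (S N))) Hb Hc) as [B [HB HB']].
    set (f' := fun p => 1 * f p + -1 * Dx m B p).
    assert (HDB : OrderLE m (S N) (Dx m B)) by (apply Dx_order; auto).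
    assert (Hf' : OrderLE m N f').
    { apply zero_lower. apply OrderLE_lin; auto.
      intros k p Hk. unfold f'. rewrite pd_lin by (apply (OrderLE_hasD m (S N)); auto).
      rewrite (pd_Dx m N B k (S N)) by auto. rewrite (pd_out_fun m N B k (S N)) by (try apply HB; lia).
      rewrite Dx_zero. rewrite HB' by auto. ring. }
    assert (HEf : forall j, (j < m)%nat -> euler m j f' = euler m j f).
    { intros j Hj. unfold f'. rewrite (euler_lin m (S N)) by auto. rewrite (euler_Dx_zero m N) by auto.
      extensionality p. ring. }
    destruct (IHn f') as [g [Hg Hg']].
    + unfold N in Hf'. auto.
    + intros j Hj. rewrite HEf; auto.
    + exists g. split; auto. intros j Hj. rewrite Hg', HEf; auto.
Qed.

End M.

Theorem mainTheorem9 (m : nat) (f : Pt -> R) (S : nat) :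
  FiniteOrder m f ->
  (forall j, (j < m)%nat -> OrderLE m S (euler m j f)) ->
  (forall K, S = (2 * K)%nat ->
     exists g : Pt -> R, OrderLE m K g /\
       forall j p, (j < m)%nat -> euler m j g p = euler m j f p) /\
  (forall K, S = (2 * K + 1)%nat ->
     exists (g0 : Pt -> R) (g : nat -> Pt -> R),
       OrderLE m K g0 /\ (forall k, (k < m)%nat -> OrderLE m K (g k)) /\
       forall j p, (j < m)%nat ->
         euler m j f p =
         euler m j (fun q => g0 q + sumR m (fun k => g k q * pw q k (K + 1)%nat)) p).
Proof.
  intros [N0 HN0] HE. split.
  - intros K HK. subst S.
    destruct (reduce m K N0 f) as [g [Hg Hg']].
    + apply OrderLE_mono with N0; auto; lia.
    + auto.
    + exists g. split; auto. intros j p Hj. rewrite Hg'; auto.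
  - intros K HK. subst S.
    destruct (reduce m (Datatypes.S K) N0 f) as [g [Hg Hg']].
    + apply OrderLE_mono with N0; auto; lia.
    + intros j Hj. apply OrderLE_mono with (2 * K + 1)%nat; auto; lia.
    + assert (HEg : forall j, (j < m)%nat -> OrderLE m (2 * K + 1) (euler m j g)) by (intros; rewrite Hg'; auto).
      assert (Hb : forall i, (i < m)%nat -> OrderLE m K (pd g (CW i (Datatypes.S K)))).
      { apply (hess_step m K g (2 * K + 1)); auto. lia. }
      set (b := fun k => pd g (CW k (Datatypes.S K))).
      set (sm := fun q => sumR m (fun k => b k q * pw q k (K + 1)%nat)).
      set (g0 := fun q => 1 * g q + -1 * sm q).
      assert (Hsm : Cl m (Datatypes.S K) sm).
      { apply (Cl_sumR m (Datatypes.S K) m (fun k q => b k q * pw q k (K + 1)%nat)). intros k Hk.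
        apply cl_mul. apply cl_base. apply OrderLE_mono with K; [lia | apply Hb; auto]. apply cl_w; auto; lia. }
      assert (HsmO := Cl_OrderLE _ _ _ Hsm).
      exists g0, b. split; [|split].
      * apply zero_lower. apply OrderLE_lin; auto.
        intros i p Hi. unfold g0. rewrite pd_lin by (apply (OrderLE_hasD m (Datatypes.S K)); auto).
        unfold sm. rewrite (pd_sumR m (fun k q => b k q * pw q k (K + 1)%nat)).
        2: { intros k Hk. apply hasD_mul. apply (OrderLE_hasD m K); apply Hb; auto. apply hasD_pw. }
        rewrite (sumR_ext m _ (fun k => if Nat.eqb k i then b k p else 0)).
        { rewrite sumR_ind. replace (Nat.ltb i m) with true by (symmetry; apply Nat.ltb_lt; auto). unfold b. ring. }
        intros k Hk. rewrite pd_mult. rewrite pd_pw_CW. rewrite (pd_out m K (b k)) by (try apply Hb; auto; lia).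
        replace (K + 1)%nat with (Datatypes.S K) by lia. rewrite Nat.eqb_refl, Bool.andb_true_r.
        destruct (Nat.eqb k i); ring.
        apply (OrderLE_hasD m K); apply Hb; auto. apply hasD_pw.
      * auto.
      * intros j p Hj. rewrite <- Hg' by auto. f_equal. extensionality q. unfold g0, sm. ring.
Qed.
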